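(* Define, for integers $n\ge 1$ and $0\le d\le n$, a set $\mathcal{M}(n,d)$ of subsets of $\{0,1\}^n$ recursively as follows. $\mathcal{M}(n,0)=\{\{v\}: v\in\{0,1\}^n\}$ and $\mathcal{M}(n,n)=\{\{0,1\}^n\}$. For $1\le d\le n-1$, $\mathcal{M}(n,d)$ consists of all classes obtained in the following way: choose $C\in\mathcal{M}(n-1,d)$ and $C'\in\mathcal{M}(n-1,d-1)$ with $C'\subset C$; let $C_1,\dots,C_k$ be the $C'$-connected components of $C$; choose $p=(p_1,\dots,p_k)\in\{0,1\}^k$; and form $$\big(C'\times\{0,1\}\big)\ \cup\ \bigcup_{q=1}^k C_q\times\{p_q\}\ \subseteq\{0,1\}^n.$$ Then for all $n\in\mathbb{N}$ and $d\in\{1,\dots,n\}$, $\mathcal{M}(n,d)$ is exactly the set of all maximum classes of VC-dimension $d$ in $\{0,1\}^n$.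
   Context: A concept class is a subset $C\subseteq\{0,1\}^n$. Its VC-dimension is the largest $m$ such that for some set $Y$ of $m$ coordinates the projection of $C$ onto $Y$ is all of $\{0,1\}^Y$. $C$ is called $d$-maximum (maximum of VC-dimension $d$) if $\mathrm{VC}(C)=d$ and $|C|=\sum_{i=0}^{d}\binom{n}{i}$. The one-inclusion graph $\Gamma(C)$ has vertex set $C$ and an edge between $u,v$ iff they differ in exactly one coordinate. A $d$-cube of $C$ is a set of $2^d$ points of $C$ that agree outside some set of $d$ coordinates and take all $2^d$ values on those coordinates (a $d$-dimensional face of $\{0,1\}^n$ contained in $C$). For $C'\subset C$, two $d$-cubes $Q_1,Q_2$ of $C$ are $C'$-connected if there is a path in $\Gamma(C)$ with one endpoint in $Q_1$ and the other in $Q_2$ that does not intersect $C'$; the $C'$-connected components of $C$ are the equivalence classes of $d$-cubes of $C$ under this relation, each regarded as the set of vertices of its cubes. $C\times\{b\}$ denotes $\{(c,b):c\in C\}\subseteq\{0,1\}^n$ for $C\subseteq\{0,1\}^{n-1}$. *)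

(* Defs.v *)
From mathcomp Require Import all_boot.
Set Implicit Arguments. Unset Strict Implicit. Unset Printing Implicit Defensive.

Definition cube (n : nat) := {ffun 'I_n -> bool}.

Definition adj n (u v : cube n) : bool := #|[set i | u i != v i]| == 1.

(* there is a path in the one-inclusion graph whose vertices all lie in D
   (used with D = C :\: C', i.e. a path in Gamma(C) avoiding C') *)
Definition pathin n (D : {set cube n}) (u v : cube n) : bool :=
  (u \in D) && connect (fun x y => [&& x \in D, y \in D & adj x y]) u v.

Definition is_dcube n (d : nat) (Q : {set cube n}) : bool :=
  [exists Y : {set 'I_n}, (#|Y| == d) &&
     [exists x : cube n, Q == [set y : cube n | [forall i in ~: Y, y i == x i]]]].

Definition dcube_of n (d : nat) (C : {set cube n}) (Q : {set cube n}) : bool :=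
  is_dcube d Q && (Q \subset C).

Definition cconn n d (C C' : {set cube n}) (Q1 Q2 : {set cube n}) : bool :=
  [&& dcube_of d C Q1, dcube_of d C Q2 &
    [exists u in Q1, exists v in Q2, pathin (C :\: C') u v]].

Definition same_comp n d (C C' : {set cube n}) (Q1 Q2 : {set cube n}) : bool :=
  connect (cconn d C C') Q1 Q2.

(* (c, b) : append a last coordinate *)
Definition ext n (c : cube n) (b : bool) : cube n.+1 :=
  [ffun i : 'I_n.+1 => if unlift ord_max i is Some j then c j else b].

Definition times n (C : {set cube n}) (b : bool) : {set cube n.+1} :=
  [set ext c b | c in C].

(* The choice p in {0,1}^k of a bit per
   C'-connected component is encoded as a function on d-cubes that is
   constant on components; the union over components C_q x {p_q} is then the
   union over d-cubes Q of C of Q x {p Q}. *)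
Inductive isM : forall n : nat, nat -> {set cube n} -> Prop :=
| M_zero n (v : cube n) : 1 <= n -> isM 0 [set v]
| M_full n : 1 <= n -> isM n [set: cube n]
| M_step m d (C C' : {set cube m}) (p : {set cube m} -> bool) :
    1 <= d -> d <= m ->
    isM d C -> isM d.-1 C' -> C' \subset C ->
    (forall Q1 Q2, dcube_of d C Q1 -> same_comp d C C' Q1 Q2 -> p Q1 = p Q2) ->
    isM d
      (times C' false :|: times C' true :|:
       \bigcup_(Q | dcube_of d C Q) times Q (p Q)).

Definition shatters n (C : {set cube n}) (Y : {set 'I_n}) : bool :=
  [forall f : cube n, [exists c in C, [forall i in Y, c i == f i]]].

Definition VCdim_eq n (C : {set cube n}) (d : nat) : Prop :=
  (exists Y : {set 'I_n}, shatters C Y /\ #|Y| = d) /\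
  (forall Y : {set 'I_n}, shatters C Y -> #|Y| <= d).

Definition maximum n (d : nat) (C : {set cube n}) : Prop :=
  VCdim_eq C d /\ #|C| = \sum_(i < d.+1) 'C(n, i).

(* Main.v *)
Require Import Defs.
From mathcomp Require Import all_boot zify.
Set Implicit Arguments. Unset Strict Implicit. Unset Printing Implicit Defensive.

Section Basics.
Variable n : nat.
Implicit Types (D E : {set cube n}) (Y W : {set 'I_n}) (x y f : cube n).

Definition sh D := [set Y | shatters D Y].
Definition slice D (i : 'I_n) (b : bool) := [set x in D | x i == b].
Definition ample D := #|sh D| = #|D|.

Lemma shattersP D Y :
  reflect (forall f, exists2 c, c \in D & forall i, i \in Y -> c i = f i) (shatters D Y).
Proof.
apply: (iffP forallP) => H f.
  have /existsP[c /andP[cD /forallP cf]] := H f.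
  by exists c => // i iY; apply/eqP; have := cf i; rewrite iY.
have [c cD cf] := H f; apply/existsP; exists c; rewrite cD /=.
by apply/forallP => i; apply/implyP => iY; rewrite cf.
Qed.

Lemma shatters_sub D E Y : D \subset E -> shatters D Y -> shatters E Y.
Proof.
move=> DE /shattersP H; apply/shattersP => f; have [c cD cf] := H f.
by exists c => //; apply: (subsetP DE).
Qed.

Lemma shatters_slice D i b Y : shatters (slice D i b) Y -> i \notin Y.
Proof.
move/shattersP => H; apply/negP => iY.
have [c] := H [ffun _ => ~~ b]; rewrite inE => /andP[_ /eqP cb] /(_ i iY).
by rewrite ffunE cb; case: (b).
Qed.

Lemma shatters0 D : (shatters D set0) = (D != set0).
Proof.
apply/shattersP/set0Pn => [H|[x xD] f]; first by have [c cD _] := H [ffun=> true]; exists c.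
by exists x => // i; rewrite inE.
Qed.

Lemma card_slices D i : #|D| = #|slice D i false| + #|slice D i true|.
Proof.
rewrite -(cardsID [set x : cube n | x i == false] D); congr (_ + _); apply: eq_card => x;
by rewrite !inE; case: (x i); rewrite ?andbT ?andbF.
Qed.

Definition shB D (i : 'I_n) := (setU [set i]) @: (sh (slice D i false) :&: sh (slice D i true)).
Definition shA D (i : 'I_n) := sh (slice D i false) :|: sh (slice D i true) :|: shB D i.

Lemma shA_sub D i : shA D i \subset sh D.
Proof.
apply/subsetP => Y; rewrite !inE -orbA => /or3P[H|H|].
- by apply: shatters_sub H; apply/subsetP => x; rewrite inE => /andP[].
- by apply: shatters_sub H; apply/subsetP => x; rewrite inE => /andP[].
case/imsetP => Z; rewrite !inE => /andP[/shattersP H0 /shattersP H1] ->.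
apply/shattersP => f; case fi: (f i).
  have [c] := H1 f; rewrite inE => /andP[cD /eqP ci] cf; exists c => // j.
  by rewrite !inE => /orP[/eqP-> | /cf]; rewrite ?ci ?fi.
have [c] := H0 f; rewrite inE => /andP[cD /eqP ci] cf; exists c => // j.
by rewrite !inE => /orP[/eqP-> | /cf]; rewrite ?ci ?fi.
Qed.

Lemma card_shA D i : #|shA D i| = #|sh (slice D i false)| + #|sh (slice D i true)|.
Proof.
rewrite cardsU.
have -> : (sh (slice D i false) :|: sh (slice D i true)) :&: shB D i = set0.
  apply/setP => Y; rewrite !inE; apply/negP => /andP[H /imsetP[Z _ YZ]]; subst Y.
  by case/orP: H => /shatters_slice; rewrite !inE eqxx.
rewrite cards0 subn0 card_in_imset.
  exact: cardsUI.
move=> Z1 Z2; rewrite !inE => /andP[/shatters_slice n1 _] /andP[/shatters_slice n2 _] E.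
by rewrite -(setU1K n1) -(setU1K n2) E.
Qed.

Lemma pajor D : #|D| <= #|sh D|.
Proof.
elim: {D}#|D| {-2}D (leqnn #|D|) => [|k IH] D.
  by rewrite leqn0 => /eqP->.
rewrite leq_eqVlt => /orP[/eqP Dk|]; last by rewrite ltnS; apply: IH.
have [x xD] : exists x, x \in D.
  by apply/set0Pn; rewrite -cards_eq0 Dk.
case: (altP (D =P [set x])) => [->|Dx].
  rewrite cards1; apply: (@leq_trans #|[set (set0 : {set 'I_n})]|); first by rewrite cards1.
  apply: subset_leq_card; apply/subsetP => Y /set1P->; rewrite inE shatters0.
  by apply/set0Pn; exists x; rewrite inE.
have [y yD yx] : exists2 y, y \in D & y != x.
  apply/exists_inP; rewrite -[X in is_true X]negbK negb_exists_in; apply/negP=> H.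
  apply/negP: Dx; rewrite negbK eqEsubset sub1set xD andbT.
  by apply/subsetP => z zD; rewrite inE; have := forall_inP H z zD; rewrite negbK.
have [i xyi] : exists i, x i != y i.
  apply/existsP; rewrite -[X in is_true X]negbK negb_exists; apply/negP => H.
  by move: yx; rewrite eq_sym => /eqP; apply; apply/ffunP => j; apply/eqP; have := forallP H j; rewrite negbK.
have lt_b b : #|slice D i b| < #|D|.
  apply: proper_card; apply/properP; split.
    by apply/subsetP => z; rewrite inE => /andP[].
  case: (boolP (x i == b)) => xb.
    exists y => //; rewrite inE yD /=; apply/negP => /eqP yb; move: xyi.
    by rewrite (eqP xb) yb eqxx.
  by exists x => //; rewrite inE xD.
apply: (leq_trans _ (subset_leq_card (shA_sub D i))).
rewrite card_shA (card_slices D i) leq_add //; apply: IH; rewrite -ltnS -Dk lt_b //.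
Qed.

Lemma ample_split D i : ample D ->
  [/\ ample (slice D i false), ample (slice D i true) & shA D i = sh D].
Proof.
rewrite /ample => aD.
have s := subset_leq_card (shA_sub D i).
have p0 := pajor (slice D i false); have p1 := pajor (slice D i true).
have cs := card_slices D i; have ca := card_shA D i.
split; try lia.
by apply/eqP; rewrite eqEcard shA_sub; lia.
Qed.

Lemma ample_split_shatters D i Y : ample D -> i \notin Y -> shatters D Y ->
  shatters (slice D i false) Y \/ shatters (slice D i true) Y.
Proof.
move=> aD iY HY; have [_ _ E] := ample_split i aD.
have : Y \in shA D i by rewrite E inE.
rewrite !inE -orbA => /or3P[->|->|]; [by left|by right|].
by case/imsetP => Z _ YZ; move: iY; rewrite YZ !inE eqxx.
Qed.

End Basics.

Section Conn.
Variable n : nat.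
Implicit Types (D E : {set cube n}) (Y W : {set 'I_n}) (x y f : cube n).

Definition flip (i : 'I_n) x : cube n := [ffun j => if j == i then ~~ x j else x j].

Lemma flipK i : involutive (flip i).
Proof. by move=> x; apply/ffunP => j; rewrite !ffunE; case: eqP => // _; rewrite negbK. Qed.

Lemma adj_flip i x : adj x (flip i x).
Proof.
rewrite /adj (_ : [set j | _] = [set i]) ?cards1 //; apply/setP => j.
by rewrite !inE ffunE; case: (j == i); case: (x j).
Qed.

Lemma adj_sym x y : adj x y = adj y x.
Proof. by rewrite /adj (_ : [set j | x j != y j] = [set j | y j != x j]) //; apply/setP => j; rewrite !inE eq_sym. Qed.

Lemma edge_lemma E i x0 y0 : ample E -> x0 \in E -> y0 \in E -> x0 i = false -> y0 i = true ->
  exists2 u, u \in slice E i false & flip i u \in E.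
Proof.
move=> aE x0E y0E x0i y0i.
set E0 := slice E i false; set E1 := slice E i true.
set U := E0 :|: flip i @: E1.
have cE := card_slices E i.
have cF : #|flip i @: E1| = #|E1| by apply: card_imset; apply: inv_inj; apply: flipK.
have cU := cardsUI E0 (flip i @: E1).
have shUi Y : shatters U Y -> i \notin Y.
  move/shattersP => H; apply/negP => iY; have [c] := H [ffun=> true].
  rewrite !inE => /orP[/andP[_ /eqP ci]|/imsetP[e]] .
    by move/(_ i iY); rewrite ffunE ci.
  rewrite inE => /andP[_ /eqP ei] -> /(_ i iY); rewrite !ffunE eqxx ei //.
have shUE : sh U :|: shB E i \subset sh E.
  apply/subsetP => Y; rewrite inE => /orP[|YB]; last first.
    by apply: (subsetP (shA_sub E i)); rewrite !inE YB !orbT.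
  rewrite !inE => HU; have iY := shUi _ HU; move/shattersP: HU => HU.
  apply/shattersP => f; have [c cU0 cf] := HU f.
  move: cU0; rewrite !inE => /orP[/andP[cE0 _]|/imsetP[e]]; first by exists c.
  rewrite inE => /andP[eE _] ce; exists e => // j jY; rewrite -cf // ce ffunE.
  by case: eqP => // ji; move: iY; rewrite -ji jY.
have cB : #|shB E i| = #|sh E0 :&: sh E1|.
  rewrite card_in_imset // => Z1 Z2; rewrite !inE.
  move=> /andP[/shatters_slice n1 _] /andP[/shatters_slice n2 _] EZ.
  by rewrite -(setU1K n1) -(setU1K n2) EZ.
have dUB : sh U :&: shB E i = set0.
  apply/setP => Y; rewrite !inE; apply/negP => /andP[/shUi H /imsetP[Z _ YZ]].
  by move: H; rewrite YZ !inE eqxx.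
have c1 := subset_leq_card shUE; rewrite cardsU dUB cards0 subn0 cB in c1.
have pU := pajor U.
have e0 : set0 \in sh E0 :&: sh E1.
  rewrite !inE !shatters0; apply/andP; split; apply/set0Pn;
  [exists x0 | exists y0]; by rewrite inE ?x0E ?y0E ?x0i ?y0i.
have c2 : 0 < #|sh E0 :&: sh E1| by apply/card_gt0P; exists set0.
have : #|U| + #|sh E0 :&: sh E1| <= #|U| + #|E0 :&: flip i @: E1|.
  rewrite cU cF -cE -aE; apply: leq_trans c1; rewrite leq_add2r; exact: pU.
rewrite leq_add2l => /(leq_trans c2).
case/card_gt0P => u; rewrite inE => /andP[uE0 /imsetP[e eE1 ue]].
exists u => //; rewrite ue flipK; move: eE1; by rewrite inE => /andP[].
Qed.

Definition er D := fun x y => [&& x \in D, y \in D & adj x y].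

Lemma connect_mono D E x y : D \subset E -> connect (er D) x y -> connect (er E) x y.
Proof.
move=> DE; apply: connect_sub => u v /and3P[uD vD a]; apply: connect1.
by rewrite /er (subsetP DE _ uD) (subsetP DE _ vD).
Qed.

Lemma ample_conn E x y : ample E -> x \in E -> y \in E -> connect (er E) x y.
Proof.
move: x y; elim: {E}#|E| {-2}E (leqnn #|E|) => [|k IH] E; last first.
move=> Ek x y aE xE yE.
case: (eqVneq x y) => [<-|xy]; first exact: connect0.
have [i xyi] : exists i, x i != y i.
  apply/existsP; rewrite -[X in is_true X]negbK negb_exists; apply/negP => H.
  by move: xy => /eqP; apply; apply/ffunP => j; apply/eqP; have := forallP H j; rewrite negbK.
have [a0 a1 _] := ample_split i aE.
have sl b : slice E i b \subset E by apply/subsetP => z; rewrite inE => /andP[].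
have lt_b b : #|slice E i b| <= k.
  rewrite -ltnS; apply: leq_trans Ek; apply: proper_card; apply/properP; split => //.
  case: (boolP (x i == b)) => xb.
    exists y => //; rewrite inE yE /=; apply/negP => /eqP yb; move: xyi.
    by rewrite (eqP xb) yb eqxx.
  by exists x => //; rewrite inE xE.
have IHb b u v : u \in slice E i b -> v \in slice E i b -> connect (er E) u v.
  move=> uS vS; apply: connect_mono (sl b) _; apply: (IH _ (lt_b b)) => //.
  by case: b uS vS => //.
wlog xi : x y xE yE xy xyi / x i = false.
  move=> W; case xi: (x i); last by apply: W.
  have yi : y i = false by move: xyi; rewrite xi; case: (y i).
  have := W y x yE xE; rewrite eq_sym xy eq_sym xyi => /(_ isT isT yi).
  by rewrite sym_connect_sym // => u v; rewrite /er adj_sym andbCA.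
have yi : y i = true by move: xyi; rewrite xi; case: (y i).
have [u uS fuE] := edge_lemma aE xE yE xi yi.
apply: connect_trans (IHb false x u _ uS) _; first by rewrite inE xE xi.
apply: (connect_trans (connect1 (_ : er E u (flip i u))) (IHb true _ y _ _)).
- by rewrite /er fuE adj_flip andbT; move: uS; rewrite inE => /andP[->].
- by rewrite inE fuE ffunE eqxx; move: uS; rewrite inE => /andP[_ /eqP->].
- by rewrite inE yE yi.
by rewrite leqn0 cards_eq0 => /eqP-> x y _; rewrite inE.
Qed.

Definition sub D W (h : cube n) := [set x in D | [forall j in W, x j == h j]].

Lemma ample_sub D W h : ample D -> ample (sub D W h).
Proof.
move=> aD; elim: {W}#|W| {-2}W (erefl #|W|) => [|k IH] W.
  move/eqP; rewrite cards_eq0 => /eqP->; suff -> : sub D set0 h = D by [].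
  by apply/setP => x; rewrite inE; case: (x \in D) => //=; apply/forall_inP => j; rewrite inE.
move=> Wk; have [i iW] : exists i, i \in W by apply/set0Pn; rewrite -cards_eq0 Wk.
have -> : sub D W h = slice (sub D (W :\ i) h) i (h i).
  apply/setP => x; rewrite !inE -andbA; congr (_ && _); apply/forall_inP/andP.
    move=> H; split; first by apply/forall_inP => j; rewrite inE => /andP[_ /H].
    exact: H.
  case=> /forall_inP H /eqP xi j jW; case: (eqVneq j i) => [->|ji]; first by rewrite xi.
  by apply: H; apply/setD1P.
have Wk' : #|W :\ i| = k by move: Wk; rewrite (cardsD1 i W) iW; case.
by have := ample_split i (IH (W :\ i) Wk'); case: (h i) => [[]|[]].
Qed.

End Conn.

Definition Phi (d n : nat) := \sum_(i < d.+1) 'C(n, i).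

Lemma Phi0 n : Phi 0 n = 1.
Proof. by rewrite /Phi big_ord1 bin0. Qed.

Lemma PhiS d m : Phi d.+1 m.+1 = Phi d.+1 m + Phi d m.
Proof.
rewrite /Phi big_ord_recl bin0.
rewrite (eq_bigr (fun i : 'I_d.+1 => 'C(m, i.+1) + 'C(m, i))); last first.
  by move=> i _; rewrite /= /bump /= add1n binS.
rewrite big_split /= addnA; congr (_ + _).
by rewrite [in RHS]big_ord_recl bin0.
Qed.

Section Mx.
Variable n : nat.
Implicit Types (D E : {set cube n}) (Y W : {set 'I_n}) (x y f : cube n).

Definition Sd d := [set Y : {set 'I_n} | #|Y| <= d].

Lemma card_Sd d : #|Sd d| = Phi d n.
Proof.
elim: d => [|d IH].
  rewrite Phi0 -(bin0 #|'I_n|) -card_draws; apply: eq_card => Y.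
  by rewrite !inE leqn0.
have -> : Sd d.+1 = Sd d :|: [set Y : {set 'I_n} | #|Y| == d.+1].
  by apply/setP => Y; rewrite !inE leq_eqVlt ltnS orbC.
rewrite cardsU (_ : _ :&: _ = set0); last first.
  by apply/setP => Y; rewrite !inE; apply/negP => /andP[H /eqP E]; move: H; rewrite E ltnn.
rewrite cards0 subn0 IH card_draws card_ord /Phi [in RHS]big_ord_recr /=; done.
Qed.

Definition mx d D := (forall Y, shatters D Y -> #|Y| <= d) /\ #|D| = Phi d n.

Lemma sh_Sd d D : (forall Y, shatters D Y -> #|Y| <= d) -> sh D \subset Sd d.
Proof. by move=> H; apply/subsetP => Y; rewrite !inE => /H. Qed.

Lemma sauer d D : (forall Y, shatters D Y -> #|Y| <= d) -> #|D| <= Phi d n.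
Proof.
move=> H; rewrite -card_Sd; apply: leq_trans (pajor D) (subset_leq_card (sh_Sd H)).
Qed.

Lemma mx_sh d D : mx d D -> sh D = Sd d.
Proof.
case=> H cD; apply/eqP; rewrite eqEcard sh_Sd // card_Sd -cD; exact: pajor.
Qed.

Lemma mx_ample d D : mx d D -> ample D.
Proof. move=> m; rewrite /ample (mx_sh m) card_Sd; by case: m. Qed.

Lemma mx_shatters d D Y : mx d D -> #|Y| <= d -> shatters D Y.
Proof. by move=> m HY; have := mx_sh m; move/setP/(_ Y); rewrite !inE HY. Qed.

Lemma maximum_mx d D : d <= n -> (maximum d D <-> mx d D).
Proof.
move=> dn; split.
  by case=> [[_ H] cD]; split.
move=> m; split; last by case: m.
split; last by case: m.
have : 0 < #|[set Y : {set 'I_n} | #|Y| == d]| by rewrite card_draws card_ord bin_gt0.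
case/card_gt0P => Y; rewrite inE => /eqP HY; exists Y; split => //.
by apply: mx_shatters m _; rewrite HY.
Qed.

End Mx.

Definition cubeset n (Y : {set 'I_n}) (x : cube n) := [set y : cube n | [forall i in ~: Y, y i == x i]].

Lemma cubesetP n (Y : {set 'I_n}) (x y : cube n) :
  reflect (forall i, i \notin Y -> y i = x i) (y \in cubeset Y x).
Proof.
rewrite inE; apply: (iffP forall_inP) => H i; rewrite ?inE => iY; first by apply/eqP/H; rewrite inE.
by apply/eqP/H.
Qed.

Section Last.
Variable m : nat.
Implicit Types (D E : {set cube m.+1}) (C : {set cube m}) (Y : {set 'I_m}) (c q x : cube m) (z : cube m.+1).

Lemma ext_max c b : ext c b ord_max = b.
Proof. by rewrite ffunE unlift_none. Qed.

Lemma ext_lift c b k : ext c b (lift ord_max k) = c k.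
Proof. by rewrite ffunE liftK. Qed.

Definition rst z : cube m := [ffun k => z (lift ord_max k)].

Lemma ext_rst z : ext (rst z) (z ord_max) = z.
Proof.
apply/ffunP => j; case: (unliftP ord_max j) => [k ->|->].
  by rewrite ext_lift ffunE.
by rewrite ext_max.
Qed.

Lemma rst_ext c b : rst (ext c b) = c.
Proof. by apply/ffunP => k; rewrite ffunE ext_lift. Qed.

Lemma ext_inj c c' b b' : ext c b = ext c' b' -> c = c' /\ b = b'.
Proof.
move=> E; split; first by rewrite -(rst_ext c b) E rst_ext.
by rewrite -(ext_max c b) E ext_max.
Qed.

Lemma ext_eq c b c' b' : (ext c b == ext c' b') = (c == c') && (b == b').
Proof.
apply/eqP/andP => [/ext_inj[-> ->]|[/eqP-> /eqP->]] //.
Qed.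

Definition PP D := [set c | (ext c false \in D) || (ext c true \in D)].
Definition RR D := [set c | (ext c false \in D) && (ext c true \in D)].
Definition TT D b := [set c | ext c b \in D].

Lemma card_PR D : #|D| = #|PP D| + #|RR D|.
Proof.
have cT b : #|slice D ord_max b| = #|TT D b|.
  have -> : slice D ord_max b = (fun c => ext c b) @: TT D b.
    apply/setP => z; rewrite inE; apply/andP/imsetP.
      by case=> zD /eqP zb; exists (rst z); rewrite ?inE -zb ext_rst.
    by case=> c; rewrite inE => cD ->; rewrite cD ext_max.
  by apply: card_imset => c c' /ext_inj[].
rewrite (card_slices D ord_max) !cT -cardsUI.
have -> : PP D = TT D false :|: TT D true by apply/setP => c; rewrite !inE.
by have -> : RR D = TT D false :&: TT D true by apply/setP => c; rewrite !inE.
Qed.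

Definition liftset Y : {set 'I_m.+1} := [set lift ord_max k | k in Y].

Lemma card_liftset Y : #|liftset Y| = #|Y|.
Proof. by apply: card_imset; apply: lift_inj. Qed.

Lemma mem_liftset Y k : (lift ord_max k \in liftset Y) = (k \in Y).
Proof. by rewrite mem_imset //; apply: lift_inj. Qed.

Lemma max_liftset Y : ord_max \notin liftset Y.
Proof. by apply/imsetP => [[k _ E]]; move: (neq_lift ord_max k); rewrite -E eqxx. Qed.

Definition pre (Y' : {set 'I_m.+1}) := [set k | lift ord_max k \in Y'].

Lemma card_pre (Y' : {set 'I_m.+1}) : #|Y'| = #|pre Y'| + (ord_max \in Y').
Proof.
rewrite (cardsD1 ord_max) addnC; congr (_ + _).
rewrite -(card_liftset (pre Y')); apply: eq_card => j; rewrite !inE.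
case: (unliftP ord_max j) => [k ->|->].
  by rewrite mem_liftset !inE eq_sym neq_lift.
by rewrite eqxx (negbTE (max_liftset _)).
Qed.

Lemma P_shatters D Y : shatters (PP D) Y -> shatters D (liftset Y).
Proof.
move/shattersP => H; apply/shattersP => f; have [c] := H (rst f).
rewrite inE => cD cf; have [b bD] : exists b, ext c b \in D.
  by case/orP: cD => ?; [exists false|exists true].
exists (ext c b) => // j /imsetP[k kY ->]; by rewrite ext_lift cf // ffunE.
Qed.

Lemma R_shatters D Y : shatters (RR D) Y -> shatters D (ord_max |: liftset Y).
Proof.
move/shattersP => H; apply/shattersP => f; have [c] := H (rst f).
rewrite inE => /andP[c0 c1] cf; exists (ext c (f ord_max)); first by case: (f ord_max).
move=> j; rewrite !inE => /orP[/eqP->|/imsetP[k kY ->]]; first by rewrite ext_max.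
by rewrite ext_lift cf // ffunE.
Qed.

Lemma D_shatters_P D (Y' : {set 'I_m.+1}) : shatters D Y' -> shatters (PP D) (pre Y').
Proof.
move/shattersP => H; apply/shattersP => c; have [z zD zf] := H (ext c false).
exists (rst z).
  by rewrite inE; move: zD; rewrite -{1}(ext_rst z); case: (z ord_max) => ->; rewrite ?orbT.
by move=> k; rewrite inE => /zf; rewrite ext_lift ffunE.
Qed.

Lemma mx_PR d D : mx (d.+1) D -> mx d.+1 (PP D) /\ mx d (RR D).
Proof.
case=> H cD.
have HP Y : shatters (PP D) Y -> #|Y| <= d.+1.
  by move/P_shatters/H; rewrite card_liftset.
have HR Y : shatters (RR D) Y -> #|Y| <= d.
  move/R_shatters/H; rewrite cardsU1 (negbTE (max_liftset _)) card_liftset; done.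
have sP := sauer HP; have sR := sauer HR.
move: cD; rewrite card_PR PhiS => cD.
have [E1 E2] : #|PP D| = Phi d.+1 m /\ #|RR D| = Phi d m.
  move: sP sR cD; move: #|PP D| #|RR D| (Phi d.+1 m) (Phi d m) => a b c e; lia.
by split; split.
Qed.

Lemma K2 D Y x0 : ample D -> cubeset Y x0 \subset PP D ->
  exists b, forall q, q \in cubeset Y x0 -> ext q b \in D.
Proof.
move=> aD QP.
set W := ~: (ord_max |: liftset Y); set h := ext x0 false.
set E := sub D W h.
have aE : ample E by apply: ample_sub.
have ED : E \subset D by apply/subsetP => z; rewrite inE => /andP[].
have Wlift k : (lift ord_max k \in W) = (k \notin Y).
  by rewrite !inE mem_liftset eq_sym (negbTE (neq_lift _ _)).
have shE : shatters E (liftset Y).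
  apply/shattersP => f.
  pose q : cube m := [ffun k => if k \in Y then f (lift ord_max k) else x0 k].
  have qQ : q \in cubeset Y x0 by apply/cubesetP => k kY; rewrite ffunE (negbTE kY).
  have [b bD] : exists b, ext q b \in D.
    by move: (subsetP QP q qQ); rewrite inE => /orP[] ?; [exists false|exists true].
  exists (ext q b).
    rewrite inE bD; apply/forall_inP => j; case: (unliftP ord_max j) => [k ->|->].
      by rewrite Wlift => kY; rewrite /h !ext_lift ffunE (negbTE kY).
    by rewrite !inE eqxx.
  by move=> j /imsetP[k kY ->]; rewrite ext_lift ffunE kY.
have key b : shatters (slice E ord_max b) (liftset Y) ->
    forall q, q \in cubeset Y x0 -> ext q b \in D.
  move/shattersP => S q qQ; have [c] := S (ext q b).
  rewrite inE => /andP[cE /eqP cm] cf.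
  suff <- : c = ext q b by apply: (subsetP ED).
  apply/ffunP => j; case: (unliftP ord_max j) => [k ->|->]; last by rewrite ext_max cm.
  case: (boolP (k \in Y)) => kY; first by rewrite cf ?mem_liftset.
  move: cE; rewrite inE => /andP[_ /forall_inP/(_ (lift ord_max k))].
  rewrite Wlift kY => /(_ isT)/eqP->; rewrite /h !ext_lift.
  by move/cubesetP: qQ => ->.
have [S|S] := ample_split_shatters aE (max_liftset Y) shE.
  by exists false; apply: key.
by exists true; apply: key.
Qed.

End Last.

Lemma Phi_nn n : Phi n n = #|[set: cube n]|.
Proof.
rewrite -card_Sd cardsT card_ffun card_bool card_ord.
have -> : Sd n n = powerset [set: 'I_n].
  by apply/setP => Y; rewrite !inE subsetT; have := max_card (mem Y); rewrite card_ord => ->.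
by rewrite card_powerset cardsT card_ord.
Qed.

Lemma full_card n (C : {set cube n}) : #|C| = Phi n n -> C = setT.
Proof. by rewrite Phi_nn => H; apply/eqP; rewrite eqEcard subsetT H /=. Qed.

Lemma cubeset0 n (x : cube n) : cubeset set0 x = [set x].
Proof.
apply/setP => y; rewrite in_set1; apply/cubesetP/eqP => [H|->] //.
by apply/ffunP => i; apply: H; rewrite inE.
Qed.

Lemma cubesetT n (x : cube n) : cubeset setT x = setT.
Proof. by apply/setP => y; rewrite in_setT; apply/cubesetP => i; rewrite inE. Qed.

Section L.
Variable m : nat.

Lemma mem_cube_lift (Y : {set 'I_m}) (x q : cube m) b b' :
  (ext q b \in cubeset (liftset Y) (ext x b')) = (q \in cubeset Y x) && (b == b').
Proof.
apply/cubesetP/andP => [H|[/cubesetP H /eqP->] j].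
  split; last by have := H ord_max (max_liftset Y); rewrite !ext_max => ->.
  apply/cubesetP => k kY; have := H (lift ord_max k); rewrite mem_liftset !ext_lift; exact.
case: (unliftP ord_max j) => [k ->|->]; last by rewrite !ext_max.
by rewrite mem_liftset !ext_lift; apply: H.
Qed.

Lemma mem_cube_lift2 (Y : {set 'I_m}) (x q : cube m) b b' :
  (ext q b \in cubeset (ord_max |: liftset Y) (ext x b')) = (q \in cubeset Y x).
Proof.
apply/cubesetP/cubesetP => [H k kY|H j].
  by have := H (lift ord_max k); rewrite !inE mem_liftset (negbTE kY) eq_sym (negbTE (neq_lift _ _)) !ext_lift; apply.
case: (unliftP ord_max j) => [k ->|->]; last by rewrite !inE eqxx.
by rewrite !inE mem_liftset eq_sym (negbTE (neq_lift _ _)) !ext_lift; apply: H.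
Qed.

End L.

Lemma card1_set n (C : {set cube n}) x : #|C| = 1 -> x \in C -> C = [set x].
Proof.
move/eqP/cards1P => [c Cc]; move: Cc => -> /set1P->; done.
Qed.

Lemma K4 n d (C : {set cube n}) x : mx d C -> d <= n -> x \in C ->
  exists (Y : {set 'I_n}) (x0 : cube n), [/\ #|Y| = d, x \in cubeset Y x0 & cubeset Y x0 \subset C].
Proof.
elim: n d C x => [|m IH] d C x [HC cC] dn xC.
  move: dn; rewrite leqn0 => /eqP d0; subst d.
  have c1 : #|C| = 1 by rewrite cC Phi0.
  exists set0, x; rewrite cards0 cubeset0 (card1_set c1 xC).
  by rewrite set11 subxx.
case: d HC cC dn => [|d] HC cC dn.
  have c1 : #|C| = 1 by rewrite cC Phi0.
  exists set0, x; rewrite cards0 cubeset0 (card1_set c1 xC).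
  by rewrite set11 subxx.
have mC : mx d.+1 C by [].
case: (eqVneq d m) => [dm|dm].
  subst d; exists setT, x; rewrite cubesetT (full_card cC) cardsT card_ord.
  by rewrite inE subxx.
have dm' : d < m by lia.
have [mP mR] := mx_PR mC.
rewrite -(ext_rst x) in xC *; move: (rst x) (x ord_max) xC => y b xC.
case: (boolP (y \in RR C)) => yR.
  have [Y' [x' [cY yQ QR]]] := IH d (RR C) y mR (ltnW dm') yR.
  exists (ord_max |: liftset Y'), (ext x' false); split.
  - by rewrite cardsU1 (negbTE (max_liftset _)) card_liftset cY.
  - by rewrite mem_cube_lift2.
  apply/subsetP => z; rewrite -(ext_rst z) mem_cube_lift2 => /(subsetP QR).
  by rewrite inE; case: (z ord_max) => /andP[].
have yP : y \in PP C by rewrite inE; case: (b) xC => ->; rewrite ?orbT.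
have [Y' [x' [cY yQ QP]]] := IH d.+1 (PP C) y mP dm' yP.
have [b0 Hb0] := K2 (mx_ample mC) QP.
have bb : b0 = b.
  apply/eqP; apply: contraNT yR => bb; rewrite inE.
  have h0 := Hb0 y yQ; move: xC h0 bb; by case: (b); case: (b0) => //= -> ->.
exists (liftset Y'). exists (ext x' b). split.
- by rewrite card_liftset.
- by rewrite mem_cube_lift yQ eqxx.
apply/subsetP => z; rewrite -(ext_rst z) mem_cube_lift => /andP[qQ /eqP->].
by rewrite -bb; apply: Hb0.
Qed.

Lemma conn_inv (T : finType) (U : Type) (e : rel T) (f : T -> U) :
  (forall x y, e x y -> f x = f y) -> forall x y, connect e x y -> f x = f y.
Proof.
move=> H x y /connectP[s]; elim: s x => [|z s IH] x /=; first by move=> _ ->.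
by case/andP => exz ps ly; rewrite (H _ _ exz); apply: IH.
Qed.

Lemma dcubeP n d (C Q : {set cube n}) :
  reflect (exists (Y : {set 'I_n}) (x0 : cube n), [/\ #|Y| = d, Q = cubeset Y x0 & Q \subset C]) (dcube_of d C Q).
Proof.
apply: (iffP andP) => [[/existsP[Y /andP[/eqP cY /existsP[x0 /eqP QE]]] QC]|[Y [x0 [cY QE QC]]]].
  by exists Y, x0.
split => //; apply/existsP; exists Y; rewrite cY eqxx /=; apply/existsP; exists x0.
by rewrite QE.
Qed.

Lemma mem_times n (A : {set cube n}) c b b' : (ext c b \in times A b') = (c \in A) && (b == b').
Proof.
apply/imsetP/andP => [[c' c'A /ext_inj[-> ->]]|[cA /eqP->]]; last by exists c.
by rewrite eqxx.
Qed.

Definition Built m d (C C' : {set cube m}) (p : {set cube m} -> bool) :=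
  times C' false :|: times C' true :|: \bigcup_(Q | dcube_of d C Q) times Q (p Q).

Lemma mem_built m d (C C' : {set cube m}) p c b :
  (ext c b \in Built d C C' p) =
  (c \in C') || [exists Q, [&& dcube_of d C Q, c \in Q & p Q == b]].
Proof.
rewrite /Built !inE !mem_times; case: (c \in C') => /=; first by case: b.
apply/bigcupP/existsP => [[Q dQ]|[Q /and3P[dQ cQ /eqP pQ]]].
  by rewrite mem_times => /andP[cQ /eqP pQ]; exists Q; rewrite dQ cQ pQ eqxx.
by exists Q => //; rewrite mem_times cQ pQ eqxx.
Qed.

Lemma max2isM n d (C : {set cube n}) : 0 < d <= n -> mx d C -> isM d C.
Proof.
elim: n d C => [|m IH] d C; first by case: d.
case: d => [//|d] /andP[_ dn] mC.
case: (eqVneq d m) => [dm|dm].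
  subst d; rewrite (full_card (proj2 mC)); exact: M_full.
have dm' : d < m by lia.
have [mP mR] := mx_PR mC.
have iP : isM d.+1 (PP C) by apply: IH => //; rewrite dm'.
have iR : isM d (RR C).
  case: d dm' dn dm mC mP mR iP => [|d'] dm' dn dm mC mP mR iP; last by apply: IH => //; lia.
  have c1 : #|RR C| = 1 by rewrite (proj2 mR) Phi0.
  by case/cards1P: (introT eqP c1) => v ->; apply: M_zero; lia.
have aC := mx_ample mC.
pose bt (q : cube m) := ext q true \in C.
have bitL q b' : q \notin RR C -> ext q b' \in C -> bt q = b'.
  by rewrite /bt inE; case: b' => // qR qC; apply/negP => qC'; move: qR; rewrite qC qC'.
pose p (Q : {set cube m}) := [exists q in Q :\: RR C, bt q].
have pL Y x0 u : cubeset Y x0 \subset PP C -> u \in cubeset Y x0 -> u \notin RR C ->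
    p (cubeset Y x0) = bt u.
  move=> QP uQ uR; have [b0 Hb0] := K2 aC QP.
  have Hv v : v \in cubeset Y x0 :\: RR C -> bt v = b0.
    by rewrite inE => /andP[vR vQ]; apply: bitL => //; apply: Hb0.
  rewrite (Hv u); last by rewrite inE uR uQ.
  apply/existsP; case: (b0) Hv => Hv; first by exists u; rewrite inE uR uQ /= Hv // inE uR uQ.
  by case=> v /andP[vQ]; rewrite Hv.
have adjL u v : u \in PP C :\: RR C -> v \in PP C :\: RR C -> adj u v -> bt u = bt v.
  move=> /setDP[uP uR] /setDP[vP vR] /cards1P[i Hi].
  have vi k : k != i -> v k = u k.
    move=> ki; apply/eqP; rewrite eq_sym; apply: contraT => H.
    have : k \in [set i] by rewrite -Hi inE H.
    by rewrite inE (negbTE ki).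
  have uv : u i != v i.
    have : i \in [set i] by rewrite set11.
    by rewrite -Hi inE.
  have QP : cubeset [set i] u \subset PP C.
    apply/subsetP => q /cubesetP Hq.
    have -> : q = (if q i == u i then u else v); last by case: ifP.
    apply/ffunP => k; case: ifP => [/eqP qi|/negbT qi]; case: (eqVneq k i) => [->|ki].
    - exact: qi.
    - by rewrite Hq // inE.
    - by move: qi uv; case: (q i); case: (u i); case: (v i).
    - by rewrite Hq ?vi // inE.
  rewrite -(pL _ _ _ QP) //; last by apply/cubesetP.
  by rewrite -(pL _ _ _ QP) //; apply/cubesetP => k; rewrite inE => ki; rewrite vi.
have pcons : forall Q1 Q2, dcube_of d.+1 (PP C) Q1 -> same_comp d.+1 (PP C) (RR C) Q1 Q2 -> p Q1 = p Q2.
  move=> Q1 Q2 _; apply: conn_inv => {}Q1 {}Q2 /and3P[/dcubeP[Y1 [x1 [_ E1 S1]]] /dcubeP[Y2 [x2 [_ E2 S2]]]].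
  case/exists_inP => u uQ /exists_inP[v vQ /andP[uD cuv]].
  have vD : v \in PP C :\: RR C.
    by rewrite -(conn_inv (f := fun x => x \in PP C :\: RR C) _ cuv) // => x y /and3P[-> ->].
  have buv : bt u = bt v by apply: (conn_inv _ cuv) => x y /and3P[xD yD]; apply: adjL.
  move: uD vD => /setDP[_ uR] /setDP[_ vR].
  by subst Q1 Q2; rewrite (pL _ _ u) // (pL _ _ v).
suff -> : C = Built d.+1 (PP C) (RR C) p by apply: M_step => //; try lia; apply/subsetP => c; rewrite !inE => /andP[->].
apply/setP => z; rewrite -(ext_rst z); move: (rst z) (z ord_max) => c b.
rewrite mem_built; apply/idP/idP.
  move=> cC; case: (boolP (c \in RR C)) => //= cR.
  have cP : c \in PP C by rewrite inE; case: (b) cC => ->; rewrite ?orbT.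
  have [Y [x0 [cY cQ QP]]] := K4 mP dm' cP.
  apply/existsP; exists (cubeset Y x0); rewrite cQ /=; apply/andP; split.
    by apply/dcubeP; exists Y, x0.
  by rewrite (pL _ _ c) // (bitL c b).
case/orP => [|/existsP[Q /and3P[/dcubeP[Y [x0 [_ QE QP]]] cQ /eqP pb]]].
  by rewrite inE; case: (b) => /andP[].
case: (boolP (c \in RR C)) => cR; first by move: cR; rewrite inE; case: (b) => /andP[].
subst Q; rewrite (pL _ _ c) // /bt in pb; case: (b) pb => // cT.
by move: (subsetP QP c cQ); rewrite inE cT orbF.
Qed.

Lemma isM2mx n d (C : {set cube n}) : isM d C -> mx d C.
Proof.
elim=> {n d C}.
- move=> n v _; split; last by rewrite cards1 Phi0.
  move=> Y /shattersP H; rewrite leqn0 cards_eq0; apply/eqP/setP => i; rewrite inE.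
  apply/negP => iY; have [c] := H [ffun j => ~~ v j]; rewrite inE => /eqP-> /(_ i iY).
  by rewrite ffunE; case: (v i).
- move=> n _; split; last by rewrite Phi_nn.
  by move=> Y _; have := max_card (mem Y); rewrite card_ord.
move=> m d C C' p d1 dm _ mC _ mC' C'C pcons.
case: d d1 dm mC mC' pcons => [//|d] _ dm mC mC' pcons /=.
change (mx d.+1 (Built d.+1 C C' p)); set D := Built d.+1 C C' p.
have memD c b : (ext c b \in D) = (c \in C') || [exists Q, [&& dcube_of d.+1 C Q, c \in Q & p Q == b]].
  exact: mem_built.
have QC Q : dcube_of d.+1 C Q -> Q \subset C by case/andP.
have PD : PP D = C.
  apply/setP => c; rewrite inE !memD; apply/idP/idP.
    have H b : (c \in C') || [exists Q, [&& dcube_of d.+1 C Q, c \in Q & p Q == b]] -> c \in C.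
      case/orP => [|/existsP[Q /and3P[dQ cQ _]]]; first by apply: (subsetP C'C).
      by apply: (subsetP (QC _ dQ)).
    by case/orP; apply: H.
  move=> cC; case: (boolP (c \in C')) => //= cC'.
  have [Y [x0 [cY cQ QS]]] := K4 mC dm cC.
  have dQ : dcube_of d.+1 C (cubeset Y x0) by apply/dcubeP; exists Y, x0.
  by apply/orP; case pQ: (p (cubeset Y x0)); [right|left]; apply/existsP; exists (cubeset Y x0);
    rewrite dQ cQ pQ.
have cc Q1 Q2 c : dcube_of d.+1 C Q1 -> dcube_of d.+1 C Q2 -> c \in Q1 -> c \in Q2 ->
    c \in C :\: C' -> connect (er (C :\: C')) c c -> p Q1 = p Q2.
  move=> d1 d2 c1 c2 cD _; apply: (pcons _ _ d1); apply: connect1.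
  rewrite /cconn d1 d2 /=; apply/exists_inP; exists c => //; apply/exists_inP; exists c => //.
  by rewrite /pathin cD connect0.
have RD : RR D = C'.
  apply/setP => c; rewrite inE !memD; case: (boolP (c \in C')) => //= cC'.
  apply/negP => /andP[/existsP[Q1 /and3P[d1 c1 /eqP p1]] /existsP[Q2 /and3P[d2 c2 /eqP p2]]].
  have cD : c \in C :\: C' by rewrite inE cC' (subsetP (QC _ d1)).
  by move: (cc Q1 Q2 c d1 d2 c1 c2 cD (connect0 _ _)); rewrite p1 p2.
split; last by rewrite card_PR PD RD (proj2 mC) (proj2 mC') PhiS.
move=> Y' shY; rewrite (card_pre Y').
have hP := D_shatters_P shY; rewrite PD in hP; have {}hP := (proj1 mC) _ hP.
case: (boolP (ord_max \in Y')) => mY; last by rewrite addn0.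
rewrite addn1; rewrite ltn_neqAle hP andbT; apply/eqP => eZ.
set Z := pre Y' in hP eZ.
have nsh : ~~ shatters C' Z by apply/negP => /(proj1 mC'); rewrite eZ ltnn.
have [g Hg] : exists g : cube m, ~~ [exists c in C', [forall i in Z, c i == g i]].
  by apply/existsP; rewrite -negb_forall.
have pick b : exists2 x, ext x b \in D & x \in sub C Z g.
  move/shattersP: shY => /(_ (ext g b)) [z zD zf].
  have zm : z ord_max = b by rewrite zf // ext_max.
  exists (rst z); first by rewrite -zm ext_rst.
  rewrite inE; apply/andP; split.
    have zD' : ext (rst z) b \in D by rewrite -zm ext_rst.
    rewrite -PD /PP in_set; apply/orP.
    by case: (b) zD'; [right|left].
  apply/forall_inP => k kZ; rewrite ffunE zf ?ext_lift //; by move: kZ; rewrite inE.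
have subF : sub C Z g \subset C :\: C'.
  apply/subsetP => x; rewrite !inE => /andP[xC xZ]; rewrite xC andbT.
  by apply: contra Hg => xC'; apply/exists_inP; exists x.
have [x xD xF] := pick false; have [y yD yF] := pick true.
have aF : ample (sub C Z g) by apply: ample_sub; apply: (mx_ample mC).
have cxy := connect_mono subF (ample_conn aF xF yF).
have xC' : x \notin C' by have := subsetP subF x xF; rewrite inE => /andP[].
have yC' : y \notin C' by have := subsetP subF y yF; rewrite inE => /andP[].
move: xD yD; rewrite !memD (negbTE xC') (negbTE yC') /=.
move=> /existsP[Q1 /and3P[d1 c1 /eqP p1]] /existsP[Q2 /and3P[d2 c2 /eqP p2]].
have : p Q1 = p Q2.
  apply: (pcons _ _ d1); apply: connect1; rewrite /cconn d1 d2 /=.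
  apply/exists_inP; exists x => //; apply/exists_inP; exists y => //.
  by rewrite /pathin (subsetP subF x xF) cxy.
by rewrite p1 p2.
Qed.

Theorem lemma2 (n d : nat) (C : {set cube n}) :
  1 <= d <= n -> (isM d C <-> maximum d C).
Proof.
move=> /andP[d1 dn]; rewrite (maximum_mx C dn); split; first exact: isM2mx.
by apply: max2isM; rewrite d1 dn.
Qed.
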